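(* Let $p=\xi_1+i\operatorname{Im}p$ be a smooth function on $T^\ast(\mathbb{R}^n)\smallsetminus0$ with $\operatorname{Im}p$ independent of $\xi_1$, and let $\gamma$ be a bicharacteristic of $\operatorname{Re}p=\xi_1$ with $L_p(\gamma)>0$. Then there exist bicharacteristics $\gamma_j$ of $\operatorname{Re}p$ and subintervals $\tilde\gamma_j\subset\gamma_j$ with $\gamma_j\dashrightarrow\gamma$, such that $|\tilde\gamma_j|\to L_p(\gamma)$, $\operatorname{Im}p$ strongly changes sign from $-$ to $+$ on $\gamma_j$, and $\operatorname{Im}p$ vanishes in a neighborhood of $\tilde\gamma_j$.
   Context: Write points of $T^\ast(\mathbb{R}^n)$ as $(x_1,x',\xi_1,\xi')$. A bicharacteristic of $\xi_1$ is $\gamma=[a,b]\times\{w_0\}=\{(t,x',0,\xi'):a\le t\le b\}$, $w_0=(x',0,\xi')$; write $g(t,w)$; $|\gamma|=b-a$. For $\gamma_j=[a_j,b_j]\times\{w_j\}$, $\gamma_j\dashrightarrow\gamma$ means $\liminf a_j\ge a$, $\limsup b_j\le b$, $w_j\to w_0$. $\operatorname{Im}p$ strongly changes sign from $-$ to $+$ on $[a,b]\times\{w_0\}$ if $\operatorname{Im}p(t,w_0)=0$ for $a\le t\le b$ and for every $\varepsilon>0$ there exist $a-\varepsilon<s_-<a$, $b<s_+<b+\varepsilon$ with $\operatorname{Im}p(s_-,w_0)<0<\operatorname{Im}p(s_+,w_0)$. If some sequence of bicharacteristics $\gamma_j$ of $\xi_1$ with this sign change satisfies $\gamma_j\dashrightarrow\gamma$,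 then $L_p(\gamma)=\inf\liminf_j|\gamma_j|$ over all such sequences. *)

(* Defs.v *)
From HB Require Import structures.
From mathcomp Require Import all_boot all_order all_algebra.
From mathcomp Require Import all_classical all_reals all_analysis.
Set Implicit Arguments. Unset Strict Implicit. Unset Printing Implicit Defensive.
Import Order.TTheory GRing.Theory Num.Theory.
Import numFieldNormedType.Exports.
Local Open Scope classical_set_scope.
Local Open Scope ring_scope.

(* Points of T^*(R^{n+1}) are pairs (x, xi) of row vectors; coordinate
   ord0 is x_1 (resp. xi_1), the remaining n coordinates are x' (resp. xi'). *)
Definition cotan (R : realType) (n : nat) := ('rV[R]_n.+1 * 'rV[R]_n.+1)%type.

Fixpoint iderive (R : realType) (V : normedModType R) (vs : seq V)
    (f : V -> R) : V -> R :=
  if vs is v :: vs' then 'D_v (iderive vs' f) else f.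

Definition smooth_on (R : realType) (V : normedModType R) (U : set V)
    (f : V -> R) : Prop :=
  forall (vs : seq V) (x : V), U x ->
    {for x, continuous (iderive vs f)} /\
    forall v : V, derivable (iderive vs f) x v.

Definition cotan0 (R : realType) (n : nat) : set (cotan R n) :=
  [set z | z.2 != 0].
Arguments cotan0 : clear implicits.

(* g(t, w) with w = (x', 0, xi'): the point (t, x', 0, xi') *)
Definition gpt (R : realType) (n : nat) (t : R) (x' xi' : 'rV[R]_n) :
    cotan R n :=
  ((row_mx t%:M x' : 'rV[R]_(1 + n)), (row_mx 0 xi' : 'rV[R]_(1 + n))).

(* [a,b] x {(x',0,xi')} is a bicharacteristic (interval) of xi_1 in T^* minus 0 *)
Definition is_bichar (R : realType) (n : nat) (a b : R) (x' xi' : 'rV[R]_n) :=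
  a <= b /\ xi' != 0.

Definition strong_sign_change (R : realType) (n : nat) (q : cotan R n -> R)
    (a b : R) (x' xi' : 'rV[R]_n) : Prop :=
  (forall t, a <= t <= b -> q (gpt t x' xi') = 0) /\
  forall eps : R, 0 < eps -> exists sm sp : R,
    [/\ a - eps < sm < a, b < sp < b + eps,
        q (gpt sm x' xi') < 0 & 0 < q (gpt sp x' xi')].

Definition bichar_conv (R : realType) (n : nat)
    (aj bj : nat -> R) (xj xij : nat -> 'rV[R]_n)
    (a b : R) (x' xi' : 'rV[R]_n) : Prop :=
  [/\ (a%:E <= limn_einf (fun j => (aj j)%:E))%E,
      (limn_esup (fun j => (bj j)%:E) <= b%:E)%E,
      xj @ \oo --> x' & xij @ \oo --> xi'].

Definition Lp_set (R : realType) (n : nat) (q : cotan R n -> R)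
    (a b : R) (x' xi' : 'rV[R]_n) : set (\bar R) :=
  [set l | exists (aj bj : nat -> R) (xj xij : nat -> 'rV[R]_n),
     [/\ forall j, is_bichar (aj j) (bj j) (xj j) (xij j),
         forall j, strong_sign_change q (aj j) (bj j) (xj j) (xij j),
         bichar_conv aj bj xj xij a b x' xi' &
         l = limn_einf (fun j => (bj j - aj j)%:E)]].

(* L_p(gamma) = inf of Lp_set (meaningful when Lp_set is nonempty) *)
Definition Lp (R : realType) (n : nat) (q : cotan R n -> R)
    (a b : R) (x' xi' : 'rV[R]_n) : \bar R :=
  ereal_inf (Lp_set q a b x' xi').

(* Main.v *)
Require Import Defs.
From HB Require Import structures.
From mathcomp Require Import all_boot all_order all_algebra.
From mathcomp Require Import all_classical all_reals all_analysis.
From mathcomp Require Import lra.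
Import Order.TTheory GRing.Theory Num.Theory.
Import numFieldNormedType.Exports.
Local Open Scope classical_set_scope.
Local Open Scope ring_scope.


Lemma mxn_le (R : realType) (m k : nat) (M : 'M[R]_(m,k)) (c : R) :
  0 <= c -> (forall i j, `|M i j| <= c) -> `|M| <= c.
Proof.
move=> c0 H; rewrite [`|M|]mx_normrE; apply/bigmax_leP; split => // -[i j] _.
Qed.

Lemma mxn_entry (R : realType) (m k : nat) (M : 'M[R]_(m,k)) i j :
  `|M i j| <= `|M|.
Proof. by rewrite [`|M|]mx_normrE; apply: (le_bigmax _ _ (i, j)). Qed.

Lemma mxn_row (R : realType) (m k1 k2 : nat) (A : 'M[R]_(m,k1)) (B : 'M[R]_(m,k2)) :
  `|row_mx A B| <= Num.max `|A| `|B|.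
Proof.
apply: mxn_le; first by rewrite le_max normr_ge0.
move=> i j; rewrite -(splitK j); case: (fintype.split j) => j' /=.
  by rewrite row_mxEl le_max mxn_entry.
by rewrite row_mxEr le_max mxn_entry orbT.
Qed.

Lemma mxn_rsub (R : realType) (k1 k2 : nat) (A : 'M[R]_(1,k1 + k2)) :
  `|rsubmx A| <= `|A|.
Proof. apply: mxn_le => // i j; rewrite mxE; exact: mxn_entry. Qed.

Lemma mxn_scalar (R : realType) (a : R) : `|(a%:M : 'M[R]_1)| <= `|a|.
Proof.
apply: mxn_le => // i j; rewrite mxE; case: (i == j) => /=.
  by rewrite mulr1n.
by rewrite mulr0n normr0.
Qed.

Lemma cont_ball (R : realType) (T : normedModType R) (f : T -> R) (P : T) :
  {for P, continuous f} -> forall e, 0 < e ->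
  exists2 r, 0 < r & forall y, `|P - y| < r -> `|f P - f y| < e.
Proof.
move=> /cvgrPdist_lt H e e0; have := H e e0 => /nbhs_ballP [r r0 Hr].
exists r => // y Py; apply: Hr; rewrite -ball_normE /=; exact: Py.
Qed.
Arguments cont_ball {R T f P}.

Lemma mxn_row1 (R : realType) (n : nat) (A : 'M[R]_1) (B : 'rV[R]_n) :
  `|(row_mx A B : 'rV[R]_n.+1)| <= Num.max `|A| `|B|.
Proof. exact (@mxn_row R 1 1 n A B). Qed.
Arguments mxn_row1 {R n}.

Lemma rowsub0 (R : realType) (m k1 k2 : nat) (A : 'M[R]_(m,k1)) (B B2 : 'M[R]_(m,k2)) :
  row_mx A B - row_mx A B2 = row_mx 0 (B - B2).
Proof. by rewrite opp_row_mx add_row_mx subrr. Qed.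

Lemma gpt_dist (R : realType) (n : nat) (s : R) (x xi x2 xi2 : 'rV[R]_n) :
  `|gpt s x xi - gpt s x2 xi2| <= Num.max `|x - x2| `|xi - xi2|.
Proof.
rewrite prod_normE /gpt /=.
rewrite (@rowsub0 _ _ _ _ s%:M x x2) (@rowsub0 _ 1 1 n 0 xi xi2).
rewrite ge_max; apply/andP; split.
  apply: (le_trans (mxn_row1 (0:'M[R]_1) (x - x2))); rewrite ge_max; apply/andP; split.
    by rewrite normr0 le_max normr_ge0.
  by rewrite le_max lexx.
apply: (le_trans (mxn_row1 (0:'M[R]_1) (xi - xi2))); rewrite ge_max; apply/andP; split.
  by rewrite normr0 le_max normr_ge0.
by rewrite le_max lexx orbT.
Qed.

Lemma gpt_dist_t (R : realType) (n : nat) (s s2 : R) (x xi : 'rV[R]_n) :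
  `|gpt s x xi - gpt s2 x xi| <= `|s - s2|.
Proof.
rewrite prod_normE /gpt /=.
have -> : row_mx s%:M x - row_mx s2%:M x = row_mx (s - s2)%:M 0 :> 'M[R]_(1, 1 + n).
  by rewrite opp_row_mx add_row_mx subrr raddfB.
rewrite (@rowsub0 _ 1 1 n 0 xi xi).
rewrite ge_max; apply/andP; split; last first.
  by apply: (le_trans (mxn_row1 (0:'M[R]_1) (xi - xi))); rewrite subrr !normr0 maxxx.
apply: (le_trans (mxn_row1 ((s - s2)%:M:'M[R]_1) (0:'rV[R]_n))); rewrite ge_max normr0 normr_ge0 andbT.
exact: mxn_scalar.
Qed.


Definition ctsR (R : realType) (f : R -> R) := forall x e, 0 < e ->
  exists2 r, 0 < r & forall y, `|x - y| < r -> `|f x - f y| < e.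
Arguments ctsR {R}.

Lemma signB (R : realType) (f : R -> R) (fc : ctsR f) (s u : R) :
  s <= u -> f s <= 0 -> 0 < f u -> exists b,
  [/\ s <= b, b <= u, f b = 0, (forall t, s <= t <= b -> f t <= 0) &
      (forall e, 0 < e -> exists t, b < t < b + e /\ 0 < f t)].
Proof.
move=> su fs fu.
pose S := [set t | s <= t <= u /\ 0 < f t].
have Su : S u by rewrite /S /= su lexx.
have hlb : has_lbound S by exists s => y [/andP[]].
have hinf : has_inf S by split => //; exists u.
have sb : s <= inf S by apply: lb_le_inf; [exists u | move=> y [/andP[]]].
have lbS : forall y, S y -> inf S <= y by move=> y Sy; exact: ge_inf.
have bu : inf S <= u by exact: lbS.
set b := inf S in sb lbS bu.
have le0 : forall t, s <= t -> t < b -> f t <= 0.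
  move=> t st tb; rewrite leNgt; apply/negP => ft.
  have : b <= t by apply: lbS; rewrite /S /= st /= ft; split => //; lra.
  lra.
have fb0 : 0 <= f b.
  rewrite leNgt; apply/negP => fb.
  have [r r0 Hr] := fc b (- f b) ltac:(lra).
  have [y Sy yb] := inf_adherent r0 hinf.
  have by' := lbS _ Sy; case: Sy => _ fy.
  have /andP[h1 h2] : - (- f b) < f b - f y < - f b.
    by rewrite -ltr_norml; apply: Hr; rewrite ltr_norml; apply/andP; split; lra.
  lra.
have fb1 : f b <= 0.
  rewrite leNgt; apply/negP => fb.
  have [sb'|sb'] := eqVneq s b; first by rewrite -sb' in fb; lra.
  have slb : s < b by rewrite lt_neqAle sb' sb.
  have [r r0 Hr] := fc b (f b) fb.
  pose m := Num.min r (b - s).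
  have m0 : 0 < m by rewrite lt_min r0 /=; lra.
  have mr : m <= r by rewrite ge_min lexx.
  have mb : m <= b - s by rewrite ge_min lexx orbT.
  have /andP[_ h] : - f b < f b - f (b - m / 2) < f b.
    by rewrite -ltr_norml; apply: Hr; rewrite ltr_norml; apply/andP; split; lra.
  have : b <= b - m / 2 by apply: lbS; rewrite /S /=; split; [apply/andP; split|]; lra.
  lra.
have fb : f b = 0 by apply/eqP; rewrite eq_le fb1 fb0.
exists b; split => //.
  move=> t /andP[st tb]; have [->|tb'] := eqVneq t b; first by rewrite fb.
  by apply: le0 => //; rewrite lt_neqAle tb' tb.
move=> e e0; have [y Sy yb] := inf_adherent e0 hinf.
have by' := lbS _ Sy; case: Sy => _ fy.
exists y; split => //; apply/andP; split => //.
rewrite lt_neqAle by' andbT; apply/eqP => E; rewrite -E fb in fy; lra.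
Qed.

Arguments signB {R} f fc s u.

Lemma sign_int (R : realType) (f : R -> R) (fc : ctsR f) (s u : R) :
  s <= u -> f s < 0 -> 0 < f u -> exists al be,
  [/\ s <= al, al <= be, be <= u, (forall t, al <= t <= be -> f t = 0) &
    (forall eps, 0 < eps -> exists sm sp,
       [/\ al - eps < sm < al, be < sp < be + eps, f sm < 0 & 0 < f sp])].
Proof.
move=> su fs fu.
have [b [sb bu fb fle fgt]] := signB f fc s u su ltac:(lra) fu.
pose g := fun t => - f (- t).
have gc : ctsR g.
  move=> x e e0; have [r r0 Hr] := fc (- x) e e0; exists r => // y xy.
  rewrite /g; have -> : - f (- x) - - f (- y) = - (f (- x) - f (- y)) by lra.
  rewrite normrN; apply: Hr; rewrite -normrN; rewrite opprB opprK addrC; exact: xy.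
have hbs : - b <= - s by rewrite lerN2.
have hg1 : g (- b) <= 0 by rewrite /g opprK; lra.
have hg2 : 0 < g (- s) by rewrite /g opprK; lra.
have [b' [sb' bu' gb' gle ggt]] := signB g gc (- b) (- s) hbs hg1 hg2.
exists (- b'), b; split => //.
- lra.
- lra.
- move=> t /andP[t1 t2]; apply/eqP; rewrite eq_le; apply/andP; split.
    by apply: fle; rewrite t2 andbT; lra.
  have := gle (- t); rewrite /g opprK; move=> h; rewrite -oppr_le0; apply: h.
  by apply/andP; split; [rewrite lerN2 | rewrite lerNl].
- move=> eps e0; have [t [/andP[t1 t2] gt]] := ggt eps e0.
  have [t' [/andP[t3 t4] ft]] := fgt eps e0.
  exists (- t), t'; split => //.
  + apply/andP; split; lra.
  + by apply/andP.
  + by rewrite /g in gt; lra.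
Qed.


Section seqs.
Context {R : realType}.
Implicit Types (u : nat -> R) (c : R).

Lemma einfE (U : (\bar R)^nat) : limn_einf U = ereal_sup (range (einfs U)).
Proof. by rewrite limn_einf_lim; apply/cvg_lim => //; exact: cvg_einfs_sup. Qed.

Lemma esupE (U : (\bar R)^nat) : limn_esup U = ereal_inf (range (esups U)).
Proof. by rewrite limn_esup_lim; apply/cvg_lim => //; exact: cvg_esups_inf. Qed.

Lemma einfsE (U : (\bar R)^nat) N : einfs U N = ereal_inf (sdrop U N).
Proof. by []. Qed.

Lemma esupsE (U : (\bar R)^nat) N : esups U N = ereal_sup (sdrop U N).
Proof. by []. Qed.

Lemma einf_freq u c : (limn_einf (fun n => (u n)%:E) < c%:E)%E ->
  forall N, exists n, (N <= n)%N /\ u n < c.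
Proof.
rewrite einfE => H N.
have : (einfs (fun n => (u n)%:E) N < c%:E)%E.
  by apply: le_lt_trans H; apply: ereal_sup_ubound; exists N.
rewrite einfsE => /ereal_inf_ltP [_ [k /= Nk <-]]; rewrite lte_fin => h.
by exists k.
Qed.

Lemma einf_gt u c : (c%:E < limn_einf (fun n => (u n)%:E))%E ->
  \forall n \near \oo, c < u n.
Proof.
rewrite einfE => /ereal_sup_gtP [_ [N _ <-]].
rewrite einfsE => H; exists N => // k /= Nk.
rewrite -lte_fin; apply: lt_le_trans H _; apply: ereal_inf_lbound.
by exists k.
Qed.

Lemma esup_lt u c : (limn_esup (fun n => (u n)%:E) < c%:E)%E ->
  \forall n \near \oo, u n < c.
Proof.
rewrite esupE => /ereal_inf_ltP [_ [N _ <-]].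
rewrite esupsE => H; exists N => // k /= Nk.
rewrite -lte_fin; apply: le_lt_trans H; apply: ereal_sup_ubound.
by exists k.
Qed.

Lemma einf_ge u c : (forall e, 0 < e -> \forall n \near \oo, c - e < u n) ->
  (c%:E <= limn_einf (fun n => (u n)%:E))%E.
Proof.
move=> H; apply/lee_addgt0Pr => e e0.
have [N _ HN] := H e e0.
rewrite einfE; apply: (@le_trans _ _ (einfs (fun n => (u n)%:E) N + e%:E)%E).
  rewrite einfsE -leeBlDr // -EFinB; apply/ereal_infP => _ [k /= Nk <-].
  by rewrite lee_fin; apply/ltW/HN.
by rewrite leeD2r //; apply: ereal_sup_ubound; exists N.
Qed.

Lemma esup_le u c : (forall e, 0 < e -> \forall n \near \oo, u n < c + e) ->
  (limn_esup (fun n => (u n)%:E) <= c%:E)%E.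
Proof.
move=> H; apply/lee_addgt0Pr => e e0.
have [N _ HN] := H e e0.
rewrite esupE; apply: (@le_trans _ _ (esups (fun n => (u n)%:E) N)%E).
  by apply: ereal_inf_lbound; exists N.
rewrite esupsE; apply/ereal_supP => _ [k /= Nk <-].
by rewrite -EFinD lee_fin; apply/ltW/HN.
Qed.

Lemma einf_le u c : (\forall n \near \oo, u n <= c) ->
  (limn_einf (fun n => (u n)%:E) <= c%:E)%E.
Proof.
move=> [N _ HN]; rewrite einfE; apply/ereal_supP => _ [M _ <-].
rewrite einfsE; apply: (@le_trans _ _ (u (maxn N M))%:E).
  by apply: ereal_inf_lbound; exists (maxn N M) => //=; rewrite leq_maxr.
by rewrite lee_fin; apply: HN => /=; rewrite leq_maxl.
Qed.

End seqs.


Lemma natinv_lt (R : realType) (e : R) : 0 < e -> \forall k \near \oo, k.+1%:R^-1 < e.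
Proof. by move=> e0; exact: (near_infty_natSinv_lt (PosNum e0)). Qed.
Arguments natinv_lt {R e}.

Lemma Mlem (R : realType) (n : nat) (q : cotan R n -> R) (a b : R) (x' xi' : 'rV[R]_n)
  (L : R) (HL : forall l, Lp_set q a b x' xi' l -> (L%:E <= l)%E)
  (d : R) (d0 : 0 < d) :
  exists2 eta, 0 < eta & forall al be (x xi : 'rV[R]_n),
    is_bichar al be x xi -> strong_sign_change q al be x xi ->
    `|x - x'| < eta -> `|xi - xi'| < eta -> a - eta < al -> be < b + eta ->
    L - d <= be - al.
Proof.
apply: contrapT => H.
have hk : forall k : nat, exists p : R * R * 'rV[R]_n * 'rV[R]_n,
    [/\ is_bichar p.1.1.1 p.1.1.2 p.1.2 p.2 /\ strong_sign_change q p.1.1.1 p.1.1.2 p.1.2 p.2,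
        `|p.1.2 - x'| < k.+1%:R^-1 /\ `|p.2 - xi'| < k.+1%:R^-1,
        a - k.+1%:R^-1 < p.1.1.1 /\ p.1.1.2 < b + k.+1%:R^-1 &
        p.1.1.2 - p.1.1.1 < L - d].
  move=> k; apply: contrapT => hn; apply: H; exists k.+1%:R^-1 => //.
  move=> al be x xi h1 h2 h3 h4 h5 h6; rewrite leNgt; apply/negP => hlt.
  by apply: hn; exists (al, be, x, xi); split.
have [F HF] := choice hk.
pose aj := fun k => (F k).1.1.1.
pose bj := fun k => (F k).1.1.2.
pose xj := fun k => (F k).1.2.
pose xij := fun k => (F k).2.
have : Lp_set q a b x' xi' (limn_einf (fun j => (bj j - aj j)%:E)).
  exists aj, bj, xj, xij; split => //.
  - by move=> j; case: (HF j) => [[]].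
  - by move=> j; case: (HF j) => [[]].
  split.
  + apply: einf_ge => e e0; have [N _ HN] := natinv_lt e0.
    exists N => // k /= Nk; have hk0 := HN k Nk; case: (HF k) => _ _ [h _] _.
    rewrite /aj; move: hk0 h; set t := k.+1%:R^-1 => hk0 h; lra.
  + apply: esup_le => e e0; have [N _ HN] := natinv_lt e0.
    exists N => // k /= Nk; have hk0 := HN k Nk; case: (HF k) => _ _ [_ h] _.
    rewrite /bj; move: hk0 h; set t := k.+1%:R^-1 => hk0 h; lra.
  + apply/cvgrPdist_lt => e e0; have [N _ HN] := natinv_lt e0.
    exists N => // k /= Nk; have hk0 := HN k Nk; case: (HF k) => _ [h _] _ _.
    rewrite distrC /xj; move: hk0 h; set t := k.+1%:R^-1 => hk0 h; lra.
  + apply/cvgrPdist_lt => e e0; have [N _ HN] := natinv_lt e0.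
    exists N => // k /= Nk; have hk0 := HN k Nk; case: (HF k) => _ [_ h] _ _.
    rewrite distrC /xij; move: hk0 h; set t := k.+1%:R^-1 => hk0 h; lra.
move=> /HL; apply/negP; rewrite -ltNge.
apply: (@le_lt_trans _ _ (L - d)%:E); last by rewrite lte_fin; lra.
apply: einf_le; exists 0%N => // k _; case: (HF k) => _ _ _ h.
rewrite /bj /aj; lra.
Qed.

Lemma Minseq (R : realType) (n : nat) (q : cotan R n -> R) (a b : R) (x' xi' : 'rV[R]_n)
  (L : R) (HLp : Lp q a b x' xi' = L%:E) (k : nat) :
  exists p : R * R * 'rV[R]_n * 'rV[R]_n,
    [/\ is_bichar p.1.1.1 p.1.1.2 p.1.2 p.2 /\ strong_sign_change q p.1.1.1 p.1.1.2 p.1.2 p.2,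
        `|p.1.2 - x'| < k.+1%:R^-1 /\ `|p.2 - xi'| < k.+1%:R^-1,
        a - k.+1%:R^-1 < p.1.1.1 /\ p.1.1.2 < b + k.+1%:R^-1 &
        p.1.1.2 - p.1.1.1 < L + k.+1%:R^-1].
Proof.
set t := k.+1%:R^-1.
have t0 : 0 < t by rewrite /t invr_gt0.
have : (Lp q a b x' xi' < (L + t)%:E)%E by rewrite HLp lte_fin; lra.
rewrite /Lp => /ereal_inf_ltP [l [aj [bj [xj [xij [hb hs [c1 c2 c3 c4] ->]]]]] hl].
have [N1 _ H1] : \forall j \near \oo, a - t < aj j.
  by apply: einf_gt; apply: lt_le_trans c1; rewrite lte_fin; lra.
have [N2 _ H2] : \forall j \near \oo, bj j < b + t.
  by apply: (esup_lt bj); rewrite (le_lt_trans c2) // lte_fin; lra.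
have [N3 _ H3] := (cvgrPdist_lt _ _).1 c3 t t0.
have [N4 _ H4] := (cvgrPdist_lt _ _).1 c4 t t0.
have [j [Nj hj]] := einf_freq (fun j => bj j - aj j) _ hl (maxn (maxn N1 N2) (maxn N3 N4)).
have j1 : (N1 <= j)%N by apply: leq_trans Nj; rewrite !leq_max leqnn ?orbT.
have j2 : (N2 <= j)%N by apply: leq_trans Nj; rewrite !leq_max leqnn ?orbT.
have j3 : (N3 <= j)%N by apply: leq_trans Nj; rewrite !leq_max leqnn ?orbT.
have j4 : (N4 <= j)%N by apply: leq_trans Nj; rewrite !leq_max leqnn ?orbT.
exists (aj j, bj j, xj j, xij j); split => //=.
- by split; rewrite distrC; [exact: H3 | exact: H4].
- by split; [exact: H1 | exact: H2].
Qed.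


Lemma ord0_lshift n : (ord0 : 'I_n.+1) = lshift n (ord0 : 'I_1).
Proof. exact: val_inj. Qed.

Lemma ent0 (R : realType) n (t : R) (x : 'rV[R]_n) :
  (row_mx (t%:M : 'M[R]_1) x : 'rV[R]_n.+1) ord0 ord0 = t.
Proof.
have h := @row_mxEl R 1 1 n t%:M x ord0 ord0.
rewrite -(ord0_lshift n) in h.
have e : (t%:M : 'M[R]_1) ord0 ord0 = t by rewrite mxE eqxx mulr1n.
exact (etrans h e).
Qed.

Lemma rsubd (R : realType) n (A : 'rV[R]_n.+1) (C : 'M[R]_1) (B : 'rV[R]_n) :
  `|rsubmx (A : 'M[R]_(1,1+n)) - B| <= `|A - (row_mx C B : 'rV[R]_n.+1)|.
Proof.
apply: mxn_le => // i j; rewrite !mxE.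
have := @mxn_entry R 1 n.+1 (A - (row_mx C B : 'rV[R]_n.+1)) i (rshift 1 j).
rewrite !mxE (unsplitK (inr _ j) : fintype.split (rshift 1 j) = inr j) =>h; exact h.
Qed.

Lemma recon1 (R : realType) n (A : 'rV[R]_n.+1) :
  (row_mx ((A ord0 ord0)%:M : 'M[R]_1) (rsubmx (A : 'M[R]_(1,1+n))) : 'rV[R]_n.+1) = A.
Proof.
have E : ((A ord0 ord0)%:M : 'M[R]_1) = lsubmx (A : 'M[R]_(1,1+n)).
  rewrite [RHS]mx11_scalar mxE; congr (_%:M); congr (A _ _); exact: val_inj.
rewrite E; exact (hsubmxK (A : 'M[R]_(1,1+n))).
Qed.

Lemma rowne0 (R : realType) n (xi : 'rV[R]_n) : xi != 0 ->
  (row_mx (0 : 'M[R]_1) xi : 'rV[R]_n.+1) != 0.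
Proof.
apply: contra => /eqP h; apply/eqP.
have := congr1 (fun M : 'M[R]_(1,1+n) => rsubmx M) h.
by rewrite row_mxKr /= => ->; rewrite linear0.
Qed.

Lemma entry_agree (R : realType) n (A : 'rV[R]_n.+1) (i : 'I_(1 + n)) : i != ord0 ->
  A ord0 i = (row_mx (0 : 'M[R]_1) (rsubmx (A : 'M[R]_(1,1+n))) : 'rV[R]_n.+1) ord0 i.
Proof.
rewrite -(splitK i); case: (fintype.split i) => j /=.
  by rewrite ord1 -ord0_lshift eqxx.
move=> _; have h := @row_mxEr R 1 1 n 0 (rsubmx (A : 'M[R]_(1,1+n))) ord0 j.
rewrite [RHS]mxE in h; exact (esym h).
Qed.

Lemma comp1 (R : realType) n (z : cotan R n) : `|z.1| <= `|z|.
Proof. by rewrite prod_normE le_max lexx. Qed.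

Lemma comp2 (R : realType) n (z : cotan R n) : `|z.2| <= `|z|.
Proof. by rewrite prod_normE le_max lexx orbT. Qed.

Lemma qrecon (R : realType) (n : nat) (q : cotan R n -> R)
  (q_indep : forall (x xi eta : 'rV[R]_n.+1), xi != 0 -> eta != 0 ->
     (forall i : 'I_n.+1, i != ord0 -> xi ord0 i = eta ord0 i) ->
     q (x, xi) = q (x, eta)) (z : cotan R n) :
  z.2 != 0 -> rsubmx (z.2 : 'M[R]_(1,1+n)) != 0 ->
  q z = q (gpt (z.1 ord0 ord0) (rsubmx (z.1 : 'M[R]_(1,1+n))) (rsubmx (z.2 : 'M[R]_(1,1+n)))).
Proof.
case: z => X Xi /= h1 h2; rewrite /gpt.
have -> : (row_mx (X ord0 ord0)%:M (rsubmx (X : 'M[R]_(1,1+n))) : 'rV[R]_n.+1) = X := @recon1 R n X.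
apply: q_indep => //; first exact: rowne0.
move=> i hi; exact: entry_agree.
Qed.
Arguments comp1 {R n}.
Arguments comp2 {R n}.
Arguments qrecon {R n q} q_indep {z}.


Lemma min2 (R : realType) (x y : R) : 0 < x -> 0 < y ->
  exists r, [/\ 0 < r, r <= x & r <= y].
Proof.
move=> x0 y0; exists (Num.min x y); rewrite lt_min x0 y0 !ge_min lexx /=.
by rewrite lexx orbT.
Qed.
Arguments min2 {R x y}.

Lemma Pgood (R : realType) (n : nat) (q : cotan R n -> R)
  (q_smooth : smooth_on (cotan0 R n) q)
  (q_indep : forall (x xi eta : 'rV[R]_n.+1), xi != 0 -> eta != 0 ->
     (forall i : 'I_n.+1, i != ord0 -> xi ord0 i = eta ord0 i) ->
     q (x, xi) = q (x, eta))
  (a b : R) (x' xi' : 'rV[R]_n) (L d eta : R) (d0 : 0 < d) (eta0 : 0 < eta)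
  (HM : forall al be (x xi : 'rV[R]_n),
    is_bichar al be x xi -> strong_sign_change q al be x xi ->
    `|x - x'| < eta -> `|xi - xi'| < eta -> a - eta < al -> be < b + eta ->
    L - d <= be - al)
  (al1 be1 : R) (x1 xi1 : 'rV[R]_n)
  (hb : is_bichar al1 be1 x1 xi1) (hs : strong_sign_change q al1 be1 x1 xi1)
  (c1 : `|x1 - x'| < eta / 2) (c2 : `|xi1 - xi'| < eta / 2)
  (c3 : a - eta / 2 < al1) (c4 : be1 < b + eta / 2)
  (t : R) (t1 : be1 - L + 2 * d <= t) (tt2 : t <= al1 + L - 2 * d) :
  exists U : set (cotan R n),
    [/\ open U, U (gpt t x1 xi1) & forall z, U z -> cotan0 R n z -> q z = 0].
Proof.
have hlen : L - d <= be1 - al1.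
  by apply: HM; [exact: hb|exact: hs|lra|lra|lra|lra].
have ta : al1 + d <= t by lra.
have tb : t <= be1 - d by lra.
apply: contrapT => hn.
set P := gpt t x1 xi1.
have hbad : forall r, 0 < r -> exists z : cotan R n,
    [/\ `|P - z| < r, z.2 != 0 & q z != 0].
  move=> r r0; apply: contrapT => h; apply: hn; exists (ball P r); split.
  - exact: ball_open.
  - exact: ballxx.
  - move=> z Bz cz; apply: contrapT => qz; apply: h; exists z; split => //.
    + by rewrite -ball_normE in Bz.
    + by apply/eqP.
have xi10 : xi1 != 0 by case: hb.
have cot (s : R) (x xi : 'rV[R]_n) : xi != 0 -> cotan0 R n (gpt s x xi).
  by move=> h; rewrite /cotan0 /gpt /=; exact: rowne0.
have qcont (s : R) (x xi : 'rV[R]_n) : xi != 0 -> {for gpt s x xi, continuous q}.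
  by move=> h; have [] := q_smooth [::] (gpt s x xi) (cot s x xi h).
case: hs => hzero hsc.
have hd4 : 0 < d / 4 by lra.
have he4 : 0 < eta / 4 by lra.
have [ep [ep0 epd epe]] := min2 hd4 he4.
have [sm [sp [/andP[sm1 sm2] /andP[sp1 sp2] qsm qsp]]] := hsc ep ep0.
have [rm rm0 Hrm] := cont_ball (qcont sm x1 xi1 xi10) (- q (gpt sm x1 xi1)) ltac:(lra).
have [rp rp0 Hrp] := cont_ball (qcont sp x1 xi1 xi10) (q (gpt sp x1 xi1)) qsp.
have [r1 [r10 r1m r1p]] := min2 rm0 rp0.
have hxi1 : 0 < `|xi1| by rewrite normr_gt0.
have [r2 [r20 r2e r2x]] := min2 ep0 hxi1.
have [r [r0 rr1 rr2]] := min2 r10 r20.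
have rrm : r <= rm by lra.
have rrp : r <= rp by lra.
have rep : r <= ep by lra.
have rxi : r <= `|xi1| by lra.
have [z [hz1 hz2 hz3]] := hbad r r0.
rewrite distrC in hz1.
set t2 := z.1 ord0 ord0.
set x2 := rsubmx (z.1 : 'M[R]_(1,1+n)).
set xi2 := rsubmx (z.2 : 'M[R]_(1,1+n)).
have hx2 : `|x2 - x1| < r.
  have h1 := @rsubd R n z.1 t%:M x1; have h2 := comp1 (z - P).
  exact: (le_lt_trans h1 (le_lt_trans h2 hz1)).
have hxi2 : `|xi2 - xi1| < r.
  have h1 := @rsubd R n z.2 0 xi1; have h2 := comp2 (z - P).
  exact: (le_lt_trans h1 (le_lt_trans h2 hz1)).
have ht2 : `|t2 - t| < r.
  have h1 := @mxn_entry R 1 n.+1 (z.1 - P.1) ord0 ord0.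
  have h2 := comp1 (z - P).
  have e : (z.1 - P.1) ord0 ord0 = t2 - t.
    rewrite [LHS]mxE mxE; have -> : P.1 ord0 ord0 = t by exact: ent0.
    by [].
  rewrite e in h1; exact: (le_lt_trans h1 (le_lt_trans h2 hz1)).
have xi20 : xi2 != 0.
  apply/eqP => e; rewrite e sub0r normrN in hxi2; lra.
have hq := qrecon q_indep hz2 xi20.
pose f := fun s => q (gpt s x2 xi2).
have fc : ctsR f.
  move=> s e e0; have [rho rho0 Hrho] := cont_ball (qcont s x2 xi2 xi20) e e0.
  exists rho => // y hy; apply: Hrho; exact: le_lt_trans (gpt_dist_t _ _ _ _ _ _) hy.
have dd : Num.max `|x1 - x2| `|xi1 - xi2| < r.
  by rewrite gt_max distrC hx2 distrC hxi2.
have fsm : f sm < 0.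
  have := Hrm (gpt sm x2 xi2) (le_lt_trans (gpt_dist _ _ _ _ _ _ _) (lt_le_trans dd rrm)).
  rewrite ltr_norml => /andP[h1 h2]; rewrite /f; lra.
have fsp : 0 < f sp.
  have := Hrp (gpt sp x2 xi2) (le_lt_trans (gpt_dist _ _ _ _ _ _ _) (lt_le_trans dd rrp)).
  rewrite ltr_norml => /andP[h1 h2]; rewrite /f; lra.
move: ht2; rewrite ltr_norml => /andP[ht2a ht2b].
have cx : `|x2 - x'| < eta.
  have := ler_distD x1 x2 x'; lra.
have cxi : `|xi2 - xi'| < eta.
  have := ler_distD xi1 xi2 xi'; lra.
have [qneg|qpos] : q z < 0 \/ 0 < q z by move: hz3; rewrite neq_lt => /orP.
- have ft2 : f t2 < 0 by rewrite /f -hq.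
  have t2sp : t2 <= sp by lra.
  have [al [be [h1 h2 h3 h4 h5]]] := @sign_int R f fc t2 sp t2sp ft2 fsp.
  have := HM al be x2 xi2 (conj h2 xi20) (conj h4 h5) cx cxi ltac:(lra) ltac:(lra).
  lra.
- have ft2 : 0 < f t2 by rewrite /f -hq.
  have smt2 : sm <= t2 by lra.
  have [al [be [h1 h2 h3 h4 h5]]] := @sign_int R f fc sm t2 smt2 fsm ft2.
  have := HM al be x2 xi2 (conj h2 xi20) (conj h4 h5) cx cxi ltac:(lra) ltac:(lra).
  lra.
Qed.


Lemma invS_le (R : realType) (m k : nat) : (m <= k)%N -> (k.+1%:R^-1 : R) <= m.+1%:R^-1.
Proof.
move=> mk; rewrite lef_pV2 ?posrE ?ltr0Sn // ler_nat ltnS //.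
Qed.

Lemma invS_gt0 (R : realType) (m : nat) : 0 < (m.+1%:R^-1 : R).
Proof. by rewrite invr_gt0 ltr0Sn. Qed.

Theorem lemma2p19 (R : realType) (n : nat) (q : cotan R n -> R)
  (q_smooth : smooth_on (cotan0 R n) q)
  (q_indep : forall (x xi eta : 'rV[R]_n.+1), xi != 0 -> eta != 0 ->
     (forall i : 'I_n.+1, i != ord0 -> xi ord0 i = eta ord0 i) ->
     q (x, xi) = q (x, eta))
  (a b : R) (x' xi' : 'rV[R]_n)
  (hgamma : is_bichar a b x' xi')
  (hLdef : Lp_set q a b x' xi' !=set0)
  (hLpos : (0 < Lp q a b x' xi')%E) :
  exists (aj bj cj dj : nat -> R) (xj xij : nat -> 'rV[R]_n),
    [/\ forall j, is_bichar (aj j) (bj j) (xj j) (xij j) /\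
          strong_sign_change q (aj j) (bj j) (xj j) (xij j),
        bichar_conv aj bj xj xij a b x' xi',
        forall j, aj j <= cj j /\ cj j <= dj j /\ dj j <= bj j,
        (fun j => (dj j - cj j)%:E) @ \oo --> Lp q a b x' xi' &
        forall j, exists U : set (cotan R n),
          [/\ open U,
              forall t, cj j <= t <= dj j -> U (gpt t (xj j) (xij j)) &
              forall z, U z -> cotan0 R n z -> q z = 0]].
Proof.
have Lfin : Lp q a b x' xi' \is a fin_num.
  have [l0 Hl0] := hLdef.
  have Ll0 : (Lp q a b x' xi' <= l0)%E by exact: ereal_inf_lbound.
  case: Hl0 => [aj [bj [xj [xij [hb hs [c1 c2 c3 c4] El0]]]]].
  have [N1 _ H1] : \forall j \near \oo, a - 1 < aj j.
    by apply: einf_gt; apply: lt_le_trans c1; rewrite lte_fin; lra.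
  have [N2 _ H2] : \forall j \near \oo, bj j < b + 1.
    by apply: (esup_lt bj); rewrite (le_lt_trans c2) // lte_fin; lra.
  have : (l0 <= (b - a + 2)%:E)%E.
    rewrite El0; apply: einf_le; exists (maxn N1 N2) => // j /= hj.
    have := H1 j (leq_trans (leq_maxl _ _) hj); have := H2 j (leq_trans (leq_maxr _ _) hj).
    lra.
  move=> hl0; rewrite ge0_fin_numE; last exact: ltW.
  exact: (le_lt_trans Ll0 (le_lt_trans hl0 (ltry _))).
set L := fine (Lp q a b x' xi').
have HLp : Lp q a b x' xi' = L%:E by rewrite /L fineK.
have L0 : 0 < L by rewrite -lte_fin -HLp.
have HL : forall l, Lp_set q a b x' xi' l -> (L%:E <= l)%E.
  by move=> l hl; rewrite -HLp; exact: ereal_inf_lbound.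
have [G HG] := choice (@Minseq R n q a b x' xi' L HLp).
pose A := fun k => (G k).1.1.1.
pose B := fun k => (G k).1.1.2.
pose X := fun k => (G k).1.2.
pose XI := fun k => (G k).2.
pose del := fun m : nat => Num.min (L / 8) (m.+1%:R^-1).
have del0 : forall m, 0 < del m.
  by move=> m; rewrite /del lt_min invS_gt0 andbT; lra.
have delL : forall m, del m <= L / 8 by move=> m; rewrite /del ge_min lexx.
have delm : forall m, del m <= m.+1%:R^-1 by move=> m; rewrite /del ge_min lexx orbT.
have hM : forall m : nat, exists eta : R, 0 < eta /\ forall al be (x xi : 'rV[R]_n),
    is_bichar al be x xi -> strong_sign_change q al be x xi ->
    `|x - x'| < eta -> `|xi - xi'| < eta -> a - eta < al -> be < b + eta ->
    L - del m <= be - al.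
  by move=> m; have [eta e0 He] := @Mlem R n q a b x' xi' L HL (del m) (del0 m); exists eta.
have [E HE] := choice hM.
have hK : forall m : nat, exists k : nat, (m <= k)%N /\ k.+1%:R^-1 < Num.min (E m / 2) (del m).
  move=> m; have hpos : 0 < Num.min (E m / 2) (del m).
    by rewrite lt_min del0 andbT; have := (HE m).1; lra.
  have [N _ HN] := natinv_lt hpos.
  exists (maxn N m); split; first exact: leq_maxr.
  exact: HN (leq_maxl _ _).
have [K HK] := choice hK.
have key : forall m, [/\ L - del m <= B (K m) - A (K m),
    B (K m) - A (K m) < L + del m,
    `|X (K m) - x'| < E m / 2 /\ `|XI (K m) - xi'| < E m / 2,
    a - E m / 2 < A (K m) /\ B (K m) < b + E m / 2 &
    [/\ `|X (K m) - x'| < m.+1%:R^-1, `|XI (K m) - xi'| < m.+1%:R^-1,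
        a - m.+1%:R^-1 < A (K m) & B (K m) < b + m.+1%:R^-1]].
  move=> m; have [mk hk] := HK m.
  move: hk; rewrite lt_min => /andP[hk1 hk2].
  have hkm := @invS_le R _ _ mk.
  have [E0 HEm] := HE m.
  case: (HG (K m)) => [[hb hs] [hx hxi] [ha hbb] hl].
  move: hk1 hk2 hkm hx hxi ha hbb hl; rewrite -/(A (K m)) -/(B (K m)) -/(X (K m)) -/(XI (K m)).
  set tk := (K m).+1%:R^-1 => hk1 hk2 hkm hx hxi ha hbb hl.
  have hlen : L - del m <= B (K m) - A (K m).
    by apply: HEm; [exact: hb | exact: hs | lra | lra | lra | lra].
  move: hkm; set tm := m.+1%:R^-1 => hkm.
  split => //; [lra | split; lra | split; lra | split; lra].
exists (fun m => A (K m)), (fun m => B (K m)),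
  (fun m => B (K m) - L + 2 * del m), (fun m => A (K m) + L - 2 * del m),
  (fun m => X (K m)), (fun m => XI (K m)).
split.
- move=> m; case: (HG (K m)) => [[hb hs] _ _ _]; split; [exact: hb | exact: hs].
- split.
  + apply: einf_ge => e e0; have [N _ HN] := natinv_lt e0.
    exists N => // m /= Nm; have := HN m Nm; case: (key m) => _ _ _ _ [_ _ h _].
    move: h; set tm := m.+1%:R^-1 => h1 h2; lra.
  + apply: esup_le => e e0; have [N _ HN] := natinv_lt e0.
    exists N => // m /= Nm; have := HN m Nm; case: (key m) => _ _ _ _ [_ _ _ h].
    move: h; set tm := m.+1%:R^-1 => h1 h2; lra.
  + apply/cvgrPdist_lt => e e0; have [N _ HN] := natinv_lt e0.
    exists N => // m /= Nm; have := HN m Nm; case: (key m) => _ _ _ _ [h _ _ _].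
    rewrite distrC; move: h; set tm := m.+1%:R^-1 => h1 h2; lra.
  + apply/cvgrPdist_lt => e e0; have [N _ HN] := natinv_lt e0.
    exists N => // m /= Nm; have := HN m Nm; case: (key m) => _ _ _ _ [_ h _ _].
    rewrite distrC; move: h; set tm := m.+1%:R^-1 => h1 h2; lra.
- move=> m; case: (key m) => h1 h2 _ _ _; have := delL m; have := del0 m.
  move=> d0 dL; split; [lra | split; lra].
- rewrite HLp; apply: cvg_EFin; first exact: nearW.
  apply/cvgrPdist_lt => e e0.
  have e5 : 0 < e / 5 by lra.
  have [N _ HN] := natinv_lt e5.
  exists N => // m /= Nm; have := HN m Nm; case: (key m) => h1 h2 _ _ _.
  have := delm m; have := del0 m; move: h1 h2; set tm := m.+1%:R^-1 => h1 h2 d0 dm hN.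
  rewrite ltr_norml; apply/andP; split; lra.
- move=> m.
  pose U := \bigcup_(V in [set V : set (cotan R n) |
     open V /\ (forall y, V y -> cotan0 R n y -> q y = 0)]) V.
  exists U; split.
  + by apply: bigcup_open => V [].
  + move=> t /andP[t1 t2].
    case: (key m) => h1 h2 [hx hxi] [ha hbb] _.
    have [E0 HEm] := HE m.
    case: (HG (K m)) => [[hb0 hs0] _ _ _].
    have [V [oV VP Vz]] := @Pgood R n q q_smooth q_indep a b x' xi' L (del m) (E m)
      (del0 m) E0 HEm (A (K m)) (B (K m)) (X (K m)) (XI (K m))
      hb0 hs0 hx hxi ha hbb t t1 t2.
    by exists V.
  + by move=> z [V [_ VP] Vz]; apply: VP.
Qed.
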